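(* Fix an integer $\ell\ge2$ and a real $p\in(0,1)$, and let $X$ be the number of derangements of $G_{k,\ell}(m)$. Then, as $k\to\infty$, \[ \mathbb{E}[X]\sim (k!)^\ell\, p^{k\ell}\exp\left\{\frac{\ell}{2}\left(1-\frac1p\right)\right\}. \]
   Context: For integers $k\ge1$, $\ell\ge2$, $D_{k,\ell}$ is the digraph with vertex set $\{v_{i,j}: i\in[k], j\in[\ell]\}$ in which $(v_{i,j},v_{i',j'})$ is an arc if and only if $j'\equiv j+1 \pmod \ell$ (the blow-up of a directed $\ell$-cycle, each vertex replaced by $k$ vertices); it has $k^2\ell$ arcs. Given $p\in(0,1)$, let $m=\lfloor pk^2\ell\rfloor$ and let $G_{k,\ell}(m)$ be a spanning subgraph of $D_{k,\ell}$ (same vertex set) chosen uniformly at random among those with exactly $m$ arcs. A permutation in a digraph $G=(V,E)$ is a bijection $f:V\to V$ such that for every $v$ either $f(v)=v$ or $(v,f(v))\in E$; a derangement is a permutation fixing no vertex. Asymptotics are as $k\to\infty$ with $\ell,p$ fixed; $A\sim B$ means $A/B\to1$. *)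

(* Defs.v *)
From HB Require Import structures.
From mathcomp Require Import all_boot all_order all_algebra all_fingroup.
From mathcomp Require Import all_classical all_reals all_analysis.
Set Implicit Arguments. Unset Strict Implicit. Unset Printing Implicit Defensive.
Import Order.TTheory GRing.Theory Num.Theory.
Local Open Scope ring_scope.

(* Vertices of D_{k,l}: v_{i,j} encoded as (i, j) : 'I_k * 'I_l (0-indexed). *)
Definition vtx (k l : nat) : finType := ('I_k * 'I_l)%type.

Definition dkl_arc (k l : nat) (u v : vtx k l) : bool :=
  (nat_of_ord v.2 == (u.2.+1 %% l))%N.

Definition dkl_arcs (k l : nat) : {set (vtx k l * vtx k l)} :=
  [set e | dkl_arc e.1 e.2].

Definition is_digraph_perm (V : finType) (E : {set (V * V)}) (f : {perm V}) : bool :=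
  [forall v, (f v == v) || ((v, f v) \in E)].

Definition is_derangement (V : finType) (E : {set (V * V)}) (f : {perm V}) : bool :=
  is_digraph_perm E f && [forall v, f v != v].

Definition num_derangements (V : finType) (E : {set (V * V)}) : nat :=
  #|[set f : {perm V} | is_derangement E f]|.

(* Spanning subgraphs of D_{k,l} with exactly m arcs (sample space of G_{k,l}(m)). *)
Definition subgraphs_m (k l m : nat) : {set {set (vtx k l * vtx k l)}} :=
  [set S : {set (vtx k l * vtx k l)} | (S \subset dkl_arcs k l) && (#|S| == m)%N].

Definition m_of (R : realType) (p : R) (k l : nat) : nat :=
  Num.truncn (p * ((k ^ 2 * l)%N)%:R).

Definition expected_derangements (R : realType) (p : R) (k l : nat) : R :=
  (\sum_(S in subgraphs_m k l (m_of p k l)) (num_derangements S)%:R)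
  / (#|subgraphs_m k l (m_of p k l)|)%:R.

(* Main.v *)
Require Import Defs.
From HB Require Import structures.
From mathcomp Require Import all_boot all_order all_algebra all_fingroup.
From mathcomp Require Import all_classical all_reals all_analysis.
From mathcomp Require Import ring lra zify.
Import numFieldNormedType.Exports.
Import Order.TTheory GRing.Theory Num.Theory.
Local Open Scope classical_set_scope.
Local Open Scope ring_scope.

Module CombPart.
Local Set Implicit Arguments.
Local Unset Strict Implicit.
Local Unset Printing Implicit Defensive.
Local Close Scope classical_set_scope.
Local Close Scope ring_scope.
Local Open Scope nat_scope.
Import mathcomp.boot.ssrnat mathcomp.boot.seq mathcomp.boot.fintype mathcomp.boot.finfun mathcomp.boot.bigop mathcomp.boot.binomial mathcomp.boot.finset mathcomp.fingroup.perm mathcomp.fingroup.fingroup.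

Lemma count_supsets (T : finType) (A E : {set T}) m :
  E \subset A -> #|E| <= m ->
  #|[set S : {set T} | (S \subset A) && (#|S| == m) && (E \subset S)]|
  = 'C(#|A| - #|E|, m - #|E|).
Proof.
move=> EA Em.
rewrite -cardsDS // -cards_draws.
set D := [set B : {set T} | B \subset A :\: E & #|B| == m - #|E|].
have inj : {in D &, injective (fun B => B :|: E)}.
  move=> B1 B2; rewrite !inE => /andP[/subsetP B1s _] /andP[/subsetP B2s _] eq12.
  apply/setP=> x; have := congr1 (fun S : {set T} => x \in S) eq12; rewrite /= !inE.
  case: (boolP (x \in E)) => xE; last by rewrite !orbF.
  have := B1s x; have := B2s x; rewrite !inE xE /=.
  by case: (x \in B1); case: (x \in B2) => // _ ->.
rewrite -(card_in_imset inj).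
apply: eq_card => S; rewrite !inE; apply/idP/imsetP.
  move=> /andP[/andP[SA /eqP Sm] ES]; exists (S :\: E); last first.
    apply/setP=> x; rewrite !inE; case: (boolP (x \in E)) => xE /=.
      by rewrite (subsetP ES) // orbT.
    by rewrite orbF.
  by rewrite inE setSD //= cardsDS // Sm.
move=> [B]; rewrite inE => /andP[BAE /eqP BS] ->.
have BA : B \subset A by apply: subset_trans BAE (subsetDl _ _).
rewrite subUset BA EA subsetUr /= andbT.
have dis : B :&: E = set0.
  apply/setP=> x; rewrite !inE; apply/negbTE; apply/negP=> /andP[xB xE].
  by have := subsetP BAE x xB; rewrite !inE xE.
by rewrite cardsU dis cards0 subn0 BS subnK.
Qed.

Section Graph.
Variables (k l : nat).
Hypothesis Hl : 1 < l.
Local Notation V := (vtx k l).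
Local Notation A := (dkl_arcs k l).

Lemma arc_neq (u v : V) : dkl_arc u v -> u != v.
Proof.
rewrite /dkl_arc => /eqP h; apply/negP => /eqP uv; subst v.
have lt := ltn_ord u.2; move: h lt Hl; set a := nat_of_ord u.2.
case: (ltngtP a.+1 l) => c.
- by rewrite modn_small //; lia.
- lia.
- by rewrite c modnn; lia.
Qed.

Definition Ef (f : {perm V}) : {set V * V} := (fun v => (v, f v)) @: setT.

Lemma der_char (S : {set V * V}) f : S \subset A ->
  is_derangement S f = (Ef f \subset S).
Proof.
move=> SA; rewrite /is_derangement /is_digraph_perm.
apply/andP/subsetP => [[/forallP h1 /forallP h2] e /imsetP[v _ ->] | h].
  by have := h1 v; rewrite (negbTE (h2 v)).
have hv v : (v, f v) \in S by apply: h; apply: imset_f.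
have hn v : f v != v.
  by have := subsetP SA _ (hv v); rewrite inE /= => /arc_neq; rewrite eq_sym.
by split; apply/forallP => v; [rewrite hv orbT | exact: hn v].
Qed.

Lemma der_S (S : {set V * V}) f : S \subset A ->
  is_derangement S f = is_derangement A f && (Ef f \subset S).
Proof.
move=> SA; rewrite !der_char //.
apply/idP/andP => [h|[]//]; split => //; exact: subset_trans h SA.
Qed.

Lemma card_Ef f : #|Ef f| = k * l.
Proof.
rewrite card_imset ?cardsT ?card_prod ?card_ord //.
by move=> u v [].
Qed.

Lemma card_A : #|A| = k * k * l.
Proof.
pose g (x : V * 'I_k) : V * V := (x.1, (x.2, ordS x.1.2)).
have ginj : injective g by move=> [x1 x2] [y1 y2] [-> ->].
have -> : A = g @: setT.
  apply/setP=> [[u [i j]]]; rewrite inE /dkl_arc /=; apply/idP/imsetP.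
    move=> /eqP h; exists (u, i); rewrite ?in_setT // /g /=.
    by do 2 f_equal; apply: val_inj; rewrite /= h.
  by move=> [[x1 x2] _ [eu ei ej]]; subst; exact: eqxx.
by rewrite (card_imset _ ginj) cardsT !card_prod !card_ord; lia.
Qed.

Definition phi_fun (s : {ffun 'I_l -> {perm 'I_k}}) (v : V) : V :=
  (s v.2 v.1, ordS v.2).

Lemma phi_inj s : injective (phi_fun s).
Proof.
move=> [u1 u2] [v1 v2] e.
have [h1 h2] : (s u2 u1, ordS u2) = (s v2 v1, ordS v2) :> ('I_k * 'I_l)%type := e.
have e2 : u2 = v2 by apply: (can_inj (@ordSK l)); apply: val_inj.
by subst v2; rewrite (perm_inj h1).
Qed.

Definition phi s : {perm V} := perm (@phi_inj s).

Lemma card_derA : #|[set f : {perm V} | is_derangement A f]| = (k`!) ^ l.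
Proof.
have phiI : injective phi.
  move=> s t h; apply/ffunP => j; apply/permP => i.
  have := congr1 (fun f : {perm V} => (f (i, j)).1) h.
  by rewrite /= !permE.
have -> : [set f : {perm V} | is_derangement A f] = phi @: setT.
  apply/setP => f; rewrite inE der_char //; apply/idP/imsetP.
    move=> /subsetP h.
    have hv v : dkl_arc v (f v) by have := h (v, f v) (imset_f _ (in_setT v)); rewrite inE.
    have hj j : injective (fun i => (f (i, j)).1).
      move=> i i' e; suff : (i, j) = (i', j) by case.
      apply: (@perm_inj _ f); move: e (hv (i, j)) (hv (i', j)); rewrite /dkl_arc.
      case: (f (i, j)) => a b; case: (f (i', j)) => a' b' /= -> /eqP hb /eqP hb'.
      by congr pair; apply/eqP; rewrite -val_eqE /= hb hb'.
    exists [ffun j => perm (hj j)] => //.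
    apply/permP => [[i j]]; rewrite permE /phi_fun /= ffunE permE.
    have := hv (i, j); rewrite /dkl_arc /= => /eqP e.
    case: (f (i, j)) e => a b /= e; congr (_, _); apply: val_inj; by rewrite /= e.
  move=> [s _ ->]; apply/subsetP => e /imsetP[v _ ->]; rewrite inE /dkl_arc /= permE.
  by [].
rewrite card_imset // cardsT card_ffun card_ord.
by rewrite (@card_Sn k).
Qed.

End Graph.

Lemma sum_der k l m : 1 < l -> k * l <= m ->
  \sum_(S in subgraphs_m k l m) num_derangements S
  = k`! ^ l * 'C(k * k * l - k * l, m - k * l).
Proof.
move=> Hl km.
pose C := 'C(k * k * l - k * l, m - k * l).
transitivity (\sum_(S in subgraphs_m k l m)
   \sum_(f : {perm vtx k l} | is_derangement (dkl_arcs k l) f && (Ef f \subset S)) 1).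
  apply: eq_bigr => S; rewrite inE => /andP[SA _].
  rewrite /num_derangements -sum1_card; apply: eq_bigl => f.
  by rewrite inE der_S.
rewrite (exchange_big_dep predT) //=.
transitivity (\sum_(f : {perm vtx k l} | is_derangement (dkl_arcs k l) f) C).
  rewrite big_mkcond /= [RHS]big_mkcond /=; apply: eq_bigr => f _.
  case: ifP => df; last first.
    by rewrite big1 // => S; rewrite andbF.
  rewrite /C -(card_Ef f) -(@card_A k l Hl) -(@count_supsets _ (dkl_arcs k l) (Ef f)); last 2 first.
  - by rewrite -der_char.
  - by rewrite card_Ef.
  rewrite -sum1_card; apply: eq_bigl => S.
  by rewrite !inE /=.
rewrite sum_nat_const -(@card_derA k l Hl); congr (_ * _).
by apply: eq_card => f; rewrite inE.
Qed.

End CombPart.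
Import CombPart.


Section An.
Variable R : realType.

Lemma cvg0_bound (u : nat -> R) (C : R) :
  (\forall k \near \oo, `|u k| <= C / k%:R) -> u @ \oo --> (0 : R^o).
Proof.
move=> h; apply/cvgr0Pnorm_lt => e e0.
near=> k.
have hk : C / e + 1 <= k%:R by near: k; exact: nbhs_infty_ger.
have k0 : (0 < k)%N by near: k; exact: nbhs_infty_gt.
have k0' : (0 : R) < k%:R by rewrite ltr0n.
have hu : `|u k| <= C / k%:R by near: k; exact: h.
apply: (le_lt_trans hu).
rewrite ltr_pdivrMr //.
have : e * (C / e + 1) <= e * k%:R by rewrite ler_pM2l.
have -> : e * (C / e + 1) = C + e by field; rewrite gt_eqF.
lra.
Unshelve. all: by end_near.
Qed.

Lemma expR_bounds (y : R) : 0 < y -> expR (1 - y^-1) <= y <= expR (y - 1).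
Proof.
move=> y0; apply/andP; split; last first.
  by have := expR_ge1Dx (y - 1); rewrite addrC subrK.
have h := expR_ge1Dx (y^-1 - 1); rewrite addrC subrK in h.
have : expR (1 - y^-1) * y^-1 <= expR (1 - y^-1) * expR (y^-1 - 1).
  by rewrite ler_pM2l ?expR_gt0.
rewrite -expRD (_ : 1 - y^-1 + (y^-1 - 1) = 0); last by ring.
rewrite expR0 => h2.
have : expR (1 - y^-1) * y^-1 * y <= y by rewrite -[X in _ <= X]mul1r ler_pM2r.
by rewrite -mulrA mulVf ?mulr1 // gt_eqF.
Qed.


Lemma sum_iota n : \sum_(i < n) (i%:R : R) = n%:R * (n%:R - 1) / 2.
Proof.
elim: n => [|n IH]; first by rewrite big_ord0 mul0r mul0r.
by rewrite big_ord_recr /= IH -addn1 natrD; field.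
Qed.

Lemma div_mono (d a b : R) : 0 <= d -> 0 < a -> a <= b -> - d / a <= - d / b.
Proof.
move=> d0 a0 ab; rewrite !mulNr lerN2; apply: ler_wpM2l => //.
by rewrite lef_pV2 ?inE ?posrE ?(lt_le_trans a0 ab).
Qed.

Lemma prod_bounds (p : R) (m N n : nat) : 0 < p -> p <= 1 -> (n < m)%N -> (m <= N)%N ->
  m%:R <= p * N%:R ->
  expR (- (n%:R * (p * N%:R - m%:R) + (1 - p) * (n%:R * (n%:R - 1) / 2))
          / (m%:R - n%:R))
  <= (\prod_(i < n) ((m - i)%N%:R / (N - i)%N%:R)) / p ^+ n
  <= expR (- (n%:R * (p * N%:R - m%:R) + (1 - p) * (n%:R * (n%:R - 1) / 2))
          / (p * N%:R)).
Proof.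
move=> p0 p1 nm mN mpN.
set th := p * N%:R - m%:R.
have th0 : 0 <= th by rewrite subr_ge0.
pose d (i : 'I_n) := th + (1 - p) * (i%:R : R).
have d0 i : 0 <= d i by rewrite /d addr_ge0 // mulr_ge0 // subr_ge0.
have sumd : \sum_(i < n) d i = n%:R * th + (1 - p) * (n%:R * (n%:R - 1) / 2).
  rewrite big_split /= sumr_const card_ord -mulr_sumr sum_iota; congr (_ + _); rewrite mulr_natl; reflexivity.
pose y (i : 'I_n) := (m - i)%N%:R / (p * (N - i)%N%:R) : R.
have im (i : 'I_n) : (i <= m)%N by apply: leq_trans (ltnW (ltn_ord i)) (ltnW nm).
have iN (i : 'I_n) : (i <= N)%N by apply: leq_trans (im i) mN.
have mi0 (i : 'I_n) : (0 : R) < (m - i)%N%:R by rewrite ltr0n subn_gt0 (ltn_trans (ltn_ord i) nm).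
have Ni0 (i : 'I_n) : (0 : R) < (N - i)%N%:R.
  by rewrite ltr0n subn_gt0 (leq_trans (ltn_trans (ltn_ord i) nm) mN).
have Ni1 (i : 'I_n) : N%:R - i%:R != 0 :> R by rewrite -natrB // gt_eqF // Ni0.
have mi1 (i : 'I_n) : m%:R - i%:R != 0 :> R by rewrite -natrB // gt_eqF // mi0.
have Ni2 (i : 'I_n) : (N - i)%N%:R != 0 :> R by rewrite gt_eqF // Ni0.
have pn0 : p != 0 by rewrite gt_eqF.
have y0 i : 0 < y i by rewrite /y divr_gt0 // mulr_gt0.
have ey1 i : y i - 1 = - d i / (p * (N - i)%N%:R).
  by rewrite /y /d /th !natrB //; field; rewrite ?Ni1 ?mi1 ?pn0.
have ey2 i : 1 - (y i)^-1 = - d i / (m - i)%N%:R.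
  by rewrite /y /d /th !natrB //; field; rewrite ?Ni1 ?mi1 ?pn0.
have -> : (\prod_(i < n) ((m - i)%N%:R / (N - i)%N%:R)) / p ^+ n = \prod_(i < n) y i.
  have -> : p ^+ n = \prod_(i < n) p by rewrite prodr_const card_ord.
  rewrite -prodf_div; apply: eq_bigr => i _.
  by rewrite /y; field; rewrite ?Ni2 ?pn0.
rewrite -sumd -!sumrN !mulr_suml !expR_sum; apply/andP; split.
  apply: ler_prod => i _; rewrite expR_ge0 /=.
  have /andP[lo _] := expR_bounds _ (y0 i); apply: le_trans lo.
  rewrite ler_expR ey2; apply: div_mono => //.
  by rewrite -natrB ?ltr0n ?subn_gt0 // ltnW.
  by rewrite -natrB ?ler_nat ?leq_sub2l // ltnW.
apply: ler_prod => i _; rewrite (ltW (y0 i)) /=.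
have /andP[_ hi] := expR_bounds _ (y0 i); apply: le_trans hi _.
rewrite ler_expR ey1; apply: div_mono => //.
  by rewrite mulr_gt0.
by rewrite ler_wpM2l ?(ltW p0) // ler_nat leq_subr.
Qed.


Lemma bin_nat_id N m n : (n <= m)%N -> (m <= N)%N ->
  ('C(N - n, m - n) * N ^_ n = 'C(N, m) * m ^_ n)%N.
Proof.
move=> nm mN.
have h1 := bin_fact mN.
have h2 : ('C(N - n, m - n) * ((m - n)`! * (N - m)`!) = (N - n)`!)%N.
  have e : (N - n - (m - n) = N - m)%N by lia.
  by rewrite -e bin_fact //; lia.
have h3 := ffact_fact nm.
have h4 := ffact_fact (leq_trans nm mN).
have X0 : (0 < (m - n)`! * (N - m)`! * (N - n)`!)%N by rewrite !muln_gt0 !fact_gt0.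
apply/eqP; rewrite -(eqn_pmul2r X0); apply/eqP.
transitivity (('C(N - n, m - n) * ((m - n)`! * (N - m)`!)) * (N ^_ n * (N - n)`!))%N.
  ring.
rewrite h2 h4 -h1 -h3; ring.
Qed.

Lemma binratio N m n : (n <= m)%N -> (m <= N)%N ->
  ('C(N - n, m - n)%:R / 'C(N, m)%:R : R)
  = \prod_(i < n) ((m - i)%N%:R / (N - i)%N%:R).
Proof.
move=> nm mN.
rewrite prodf_div -!natr_prod -!ffact_prod.
have C0 : (0 < 'C(N, m))%N by rewrite bin_gt0.
have b0 : (0 < N ^_ n)%N by rewrite ffact_gt0 (leq_trans nm mN).
apply/eqP; rewrite eqr_div ?pnatr_eq0 -?lt0n // -!natrM eqr_nat.
by rewrite bin_nat_id // mulnC.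
Qed.

End An.


Section Alg.
Variable R : realFieldType.

Lemma b_alg (p K L th : R) : 0 < p -> p < 1 -> 1 <= K -> 2 <= L -> 0 <= th < 1 ->
  `|- ((K * L) * th + (1 - p) * ((K * L) * ((K * L) - 1) / 2)) / (p * (K * K * L))
     - L / 2 * (1 - p^-1)| <= p^-1 / K.
Proof.
move=> p0 p1 K1 L2 /andP[t0 t1].
have K0 : 0 < K by lra.
have pK0 : 0 < p * K by rewrite mulr_gt0.
have -> : - ((K * L) * th + (1 - p) * ((K * L) * ((K * L) - 1) / 2)) / (p * (K * K * L))
     - L / 2 * (1 - p^-1) = ((1 - p) / 2 - th) / (p * K).
  field; rewrite ?gt_eqF //; lra.
rewrite normrM normfV (gtr0_norm pK0).
have -> : p^-1 / K = (p * K)^-1 by rewrite invfM.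
rewrite -[X in _ <= X]mul1r ler_wpM2r //; first by rewrite invr_ge0 ltW.
rewrite ler_norml; lra.
Qed.

Lemma a_alg (p K L th : R) : 0 < p -> p < 1 -> 1 <= K -> 4 <= p * K -> 2 <= L -> 0 <= th < 1 ->
  `|- ((K * L) * th + (1 - p) * ((K * L) * ((K * L) - 1) / 2))
       / ((p * (K * K * L) - th) - K * L)
     - L / 2 * (1 - p^-1)| <= (p^-1 + 4 * ((L / 2 + 1) / p) / p) / K.
Proof.
move=> p0 p1 K1 pK4 L2 /andP[t0 t1].
have K0 : 0 < K by lra.
have pK0 : 0 < p * K by rewrite mulr_gt0.
set n := K * L.
have n2 : 2 <= n by rewrite /n; nra.
set D := n * th + _.
set c := L / 2 * (1 - p^-1).
set B := - D / (p * (K * K * L)) - c.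
have hB : `|B| <= p^-1 / K by apply: b_alg => //; rewrite t0.
have pN : p * (K * K * L) = (p * K) * n by rewrite /n; ring.
have pN4 : 4 * n <= p * (K * K * L).
  by rewrite pN ler_wpM2r //; lra.
have mn : p * (K * K * L) / 2 <= p * (K * K * L) - th - n by lra.
have mn0 : 0 < p * (K * K * L) - th - n by lra.
have -> : - D / (p * (K * K * L) - th - n) - c
   = (B + c) * ((th + n) / (p * (K * K * L) - th - n)) + B.
  rewrite /B; field; rewrite ?gt_eqF //; try lra; rewrite pN mulf_neq0 // gt_eqF //; lra.
have hBc : `|B + c| <= (L / 2 + 1) / p.
  apply: (le_trans (ler_normD _ _)).
  have hc : `|c| <= L / 2 / p.
    rewrite /c ler0_norm; last first.
      apply: mulr_ge0_le0; first lra.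
      by rewrite subr_le0 invf_ge1 // ltW.
    rewrite -mulrN opprB; apply: ler_wpM2l; lra.
  have hB1 : p^-1 / K <= p^-1.
    by rewrite ler_pdivrMr // ler_peMr // invr_ge0 ltW.
  have : (L / 2 + 1) / p = L / 2 / p + p^-1 by field; rewrite gt_eqF.
  lra.
have hr0 : 0 <= (th + n) / (p * (K * K * L) - th - n).
  by rewrite divr_ge0 //; lra.
have hr : (th + n) / (p * (K * K * L) - th - n) <= 4 / (p * K).
  rewrite ler_pdivrMr // mulrAC ler_pdivlMr //.
  have : (th + n) * (p * K) <= 2 * n * (p * K) by rewrite ler_wpM2r ?ltW //; lra.
  have : 2 * n * (p * K) = (p * K * n) / 2 * 4 by field.
  rewrite -pN; lra.
apply: (le_trans (ler_normD _ _)).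
rewrite normrM (ger0_norm hr0).
have : `|B + c| * ((th + n) / (p * (K * K * L) - th - n)) <= (L / 2 + 1) / p * (4 / (p * K)).
  by apply: ler_pM => //.
have : (p^-1 + 4 * ((L / 2 + 1) / p) / p) / K = (L / 2 + 1) / p * (4 / (p * K)) + p^-1 / K.
  by field; rewrite ?gt_eqF //; lra.
lra.
Qed.

End Alg.


Section Main.
Variables (R : realType) (l : nat) (p : R).
Hypotheses (l2 : (2 <= l)%N) (p0 : 0 < p) (p1 : p < 1).

Let N k := (k * k * l)%N.
Let n k := (k * l)%N.
Let M k := m_of p k l.
Let th k : R := p * (N k)%:R - (M k)%:R.
Let D k : R := (n k)%:R * th k + (1 - p) * ((n k)%:R * ((n k)%:R - 1) / 2).
Let c : R := (l%:R / 2) * (1 - p^-1).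
Let a k : R := - D k / ((M k)%:R - (n k)%:R) - c.
Let b k : R := - D k / (p * (N k)%:R) - c.

Lemma th_bounds k : 0 <= th k < 1.
Proof.
have e : (k ^ 2 * l)%N = N k by rewrite /N mulnn.
have hx : 0 <= p * (N k)%:R by rewrite mulr_ge0 // ltW.
have /andP[h1 h2] := truncn_itv hx.
rewrite /th /M /m_of e; apply/andP; split; first by rewrite subr_ge0.
by move: h2; rewrite -natr1; lra.
Qed.


Lemma Nr k : ((N k)%:R : R) = k%:R * k%:R * l%:R.
Proof. by rewrite /N !natrM. Qed.
Lemma nr k : ((n k)%:R : R) = k%:R * l%:R.
Proof. by rewrite /n !natrM. Qed.
Lemma Mr k : ((M k)%:R : R) = p * (N k)%:R - th k.
Proof. by rewrite /th; ring. Qed.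

Lemma lin1 (x y z : R) : 4 * x <= z -> y < 1 -> 2 <= x -> x < z - y.
Proof. lra. Qed.
Lemma lin2 (q N' M' : R) : q < 1 -> 0 <= N' -> M' <= q * N' -> M' <= N'.
Proof. nra. Qed.
Lemma lin3 (M' y z : R) : M' = z - y -> 0 <= y -> M' <= z.
Proof. lra. Qed.
Lemma lin4 (x z t : R) : z = t * x -> 4 <= t -> 0 <= x -> 4 * x <= z.
Proof. nra. Qed.

Lemma facts k : (0 < k)%N -> 4 / p <= k%:R ->
  [/\ 4 <= p * k%:R, (n k < M k)%N, (M k <= N k)%N & (M k)%:R <= p * (N k)%:R].
Proof.
move=> k0 hk.
have K1 : (1 : R) <= k%:R by rewrite ler1n.
have L2 : (2 : R) <= l%:R by rewrite ler_nat.
have pK : 4 <= p * k%:R by rewrite mulrC -ler_pdivrMr.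
have /andP[t0 t1] := th_bounds k.
have n2 : (2 : R) <= (n k)%:R.
  rewrite nr (_ : (2:R) = 1 * 2); last by rewrite mul1r.
  by apply: ler_pM.
have pN : p * (N k)%:R = (p * k%:R) * (n k)%:R by rewrite Nr nr; ring.
have pN4 : 4 * (n k)%:R <= p * (N k)%:R by apply: lin4 pN pK _.
have hM : (M k)%:R <= p * (N k)%:R by apply: lin3 (Mr k) t0.
split => //.
- have : ((n k)%:R : R) < (M k)%:R by rewrite Mr; apply: lin1.
  by rewrite ltr_nat.
- have : ((M k)%:R : R) <= (N k)%:R by apply: lin2 p1 _ hM.
  by rewrite ler_nat.
Qed.

Lemma expected_eq k : (n k <= M k)%N ->
  expected_derangements p k l
  = (k`! ^ l)%:R * ('C(N k - n k, M k - n k)%:R / 'C(N k, M k)%:R).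
Proof.
move=> nM.
rewrite /expected_derangements -natr_sum.
rewrite (@sum_der k l (m_of p k l) l2 nM).
rewrite /subgraphs_m cards_draws card_A // natrM mulrA.
by [].
Qed.


Lemma cvg_exp0 (u : nat -> R) : u @ \oo --> (0 : R^o) ->
  (fun k => expR (u k)) @ \oo --> (1 : R^o).
Proof.
move=> hu; rewrite -expR0.
apply: (cvg_comp u expR hu).
exact: continuous_expR.
Qed.

Lemma cvg_b : (fun k => expR (b k)) @ \oo --> (1 : R^o).
Proof.
apply: cvg_exp0; apply: (@cvg0_bound R _ p^-1).
near=> k.
have k0 : (0 < k)%N by near: k; exact: nbhs_infty_gt.
have K1 : (1 : R) <= k%:R by rewrite ler1n.
have L2 : (2 : R) <= l%:R by rewrite ler_nat.
have := @b_alg R p k%:R l%:R (th k) p0 p1 K1 L2 (th_bounds k).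
by rewrite /b /D nr Nr.
Unshelve. all: by end_near.
Qed.

Lemma cvg_a : (fun k => expR (a k)) @ \oo --> (1 : R^o).
Proof.
apply: cvg_exp0.
apply: (@cvg0_bound R _ (p^-1 + 4 * ((l%:R / 2 + 1) / p) / p)).
near=> k.
have k0 : (0 < k)%N by near: k; exact: nbhs_infty_gt.
have hk : 4 / p <= k%:R by near: k; exact: nbhs_infty_ger.
have K1 : (1 : R) <= k%:R by rewrite ler1n.
have L2 : (2 : R) <= l%:R by rewrite ler_nat.
have [pK _ _ _] := facts k k0 hk.
have := @a_alg R p k%:R l%:R (th k) p0 p1 K1 pK L2 (th_bounds k).
by rewrite /a /D Mr nr Nr.
Unshelve. all: by end_near.
Qed.

Lemma divbounds (F P q E X Y : R) (L j : nat) : 0 < F -> 0 < q -> 0 < E ->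
  X <= P / q ^+ j <= Y ->
  X * E^-1 <= F ^+ L * P / (F ^+ L * q ^+ j * E) <= Y * E^-1.
Proof.
move=> F0 q0 E0 h.
have -> : F ^+ L * P / (F ^+ L * q ^+ j * E) = P / q ^+ j * E^-1.
  field; rewrite ?gt_eqF ?exprn_gt0 //.
by rewrite !ler_pM2r ?invr_gt0.
Qed.

Lemma Q_bounds k : (0 < k)%N -> 4 / p <= k%:R ->
  expR (a k) <=
  expected_derangements p k l /
     (((k`!)%:R) ^+ l * p ^+ (k * l) * expR ((l%:R / 2) * (1 - p^-1)))
  <= expR (b k).
Proof.
move=> k0 hk.
have [pK nM MN hM] := facts k k0 hk.
have := @prod_bounds R p (M k) (N k) (n k) p0 (ltW p1) nM MN hM.
rewrite (expected_eq k (ltnW nM)) (@binratio R (N k) (M k) (n k) (ltnW nM) MN).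
set P := \prod_(i < _) _.
move=> hb; rewrite natrX /a /b !expRD !expRN.
have F0 : (0 : R) < k`!%:R by rewrite ltr0n fact_gt0.
exact: (@divbounds (k`!%:R) P p (expR c) _ _ l (n k) F0 p0 (expR_gt0 c) hb).
Qed.

Lemma main_cvg :
  (fun k : nat => expected_derangements p k l /
     (((k`!)%:R) ^+ l * p ^+ (k * l) * expR ((l%:R / 2) * (1 - p^-1))))
    @ \oo --> (1 : R^o).
Proof.
apply: (@squeeze_cvgr _ _ _ R (fun k => expR (a k)) (fun k => expR (b k))); [|exact: cvg_a|exact: cvg_b].
near=> k.
have k0 : (0 < k)%N by near: k; exact: nbhs_infty_gt.
have hk : 4 / p <= k%:R by near: k; exact: nbhs_infty_ger.
exact: Q_bounds.
Unshelve. all: by end_near.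
Qed.

End Main.


Theorem mainTheorem5 (R : realType) (l : nat) (p : R) :
  (2 <= l)%N -> 0 < p -> p < 1 ->
  (fun k : nat => expected_derangements p k l /
     (((k`!)%:R) ^+ l * p ^+ (k * l) * expR ((l%:R / 2) * (1 - p^-1))))
    @ \oo --> (1 : R^o).
Proof.
move=> l2 p0 p1; exact: (@main_cvg R l p l2 p0 p1).
Qed.
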